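(* Let $K$ be a field of characteristic $0$, let $W\le S_d$ be a permutation group and $\chi$ a one-dimensional character of $W$. For $n\in\mathbb N_0$ let $g_n(\chi;x_0,\dots,x_n)=\sum_{j\in J(n,d,\chi)}x_{j_1}\cdots x_{j_d}$ and let $g(\chi;x_0,x_1,x_2,\dots)=\sum_{j\in J(\mathbb N_0^d,\chi)}x_{j_1}\cdots x_{j_d}$ (a formal infinite sum of monomials). Then each $g_n$ is a symmetric polynomial in $x_0,\dots,x_n$, one has $g(\chi;x_0,\dots,x_n,0,0,\dots)=g_n(\chi;x_0,\dots,x_n)$ for all $n$, so that the sequence $(g_n)_{n\ge0}$ determines a symmetric function in the countably many variables $x_0,x_1,x_2,\dots$; this symmetric function coincides both with the characteristic of the polynomial functor $[\chi]^d(-)$ and with $g(\chi;x_0,x_1,x_2,\dots)$.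
   Context: A one-dimensional character of $W$ is a homomorphism $W\to K^\times$. For a $K$-linear space $E$, $W$ acts on $\otimes^d E$ by $\sigma(x_1\otimes\cdots\otimes x_d)=x_{\sigma^{-1}(1)}\otimes\cdots\otimes x_{\sigma^{-1}(d)}$; ${}_\chi(\otimes^dE)$ is the subspace spanned by all $\chi^{-1}(\sigma)z-\sigma z$ ($\sigma\in W$, $z\in\otimes^dE$); the semi-symmetric power is $[\chi]^d(E)=\otimes^dE/{}_\chi(\otimes^dE)$, with $x_1\chi\cdots\chi x_d$ the image of $x_1\otimes\cdots\otimes x_d$. For a linear map $l\colon E\to E'$, $[\chi]^d(l)$ is the linear map with $x_1\chi\cdots\chi x_d\mapsto l(x_1)\chi\cdots\chi l(x_d)$; this makes $[\chi]^d(-)$ a polynomial functor homogeneous of degree $d$ on finite-dimensional $K$-linear spaces. Index sets: for a well-ordered set $L$, $W$ acts on $L^d$ by $\sigma(i_1,\dots,i_d)=(i_{\sigma^{-1}(1)},\dots,i_{\sigma^{-1}(d)})$; $J(L^d,\chi)$ is the set of those elements $j\in L^d$ which are lexicographically minimal in their $W$-orbit and satisfy $\chi(\sigma)=1$ for all $\sigma$ in the stabilizer $W_j$. $J(n,d,\chi)=J([0,n]^d,\chi)$ with $[0,n]=\{0,1,\dots,n\}$, and $\mathbb N_0=\{0,1,2,\dots\}$. The characteristic of a polynomial functor $F$ homogeneous of degree $d$ is the symmetric function whose specialization $x_{n+1}=x_{n+2}=\cdots=0$ is, for each $n$, the trace of $F(\mathrm{diag}(x_0,\dots,x_n))$ acting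 on $F(K^{n+1})$, regarded as a polynomial in $x_0,\dots,x_n$. *)

(* Defs.v *)
From HB Require Import structures.
From mathcomp Require Import all_boot all_order all_algebra all_fingroup.
From mathcomp Require Import mpoly.
Set Implicit Arguments. Unset Strict Implicit. Unset Printing Implicit Defensive.
Import Order.TTheory GRing.Theory.
Local Open Scope ring_scope.

Section SemiSym.
Variable K : fieldType.
Variable d : nat.

Definition one_dim_char (W : {group 'S_d}) (chi : 'S_d -> K) : Prop :=
  (forall s t, s \in W -> t \in W -> chi (s * t)%g = chi s * chi t) /\
  (forall s, s \in W -> chi s != 0).

Definition act_idx (T : Type) (s : 'S_d) (j : d.-tuple T) : d.-tuple T :=
  [tuple tnth j ((s^-1)%g i) | i < d].

Definition lexle (disp : Order.disp_t) (T : orderType disp) (j k : d.-tuple T) : bool :=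
  ((val j : seqlexi T) <= (val k : seqlexi T))%O.

Definition inJ (disp : Order.disp_t) (T : orderType disp)
    (W : {group 'S_d}) (chi : 'S_d -> K) (j : d.-tuple T) : bool :=
  [forall s in W, lexle j (act_idx s j)] &&
  [forall s in W, (act_idx s j == j) ==> (chi s == 1)].

Definition g_n (W : {group 'S_d}) (chi : 'S_d -> K) (n : nat) : {mpoly K[n.+1]} :=
  \sum_(j : d.-tuple 'I_n.+1 | inJ W chi j) \prod_(i < d) 'X_(tnth j i).

(* g(chi; x_0, x_1, ...) is the formal sum over j in J(N_0^d, chi) of the
   monomials x_{j_1}...x_{j_d}.  Its specialization x_{n+1} = x_{n+2} = ... = 0
   kills every monomial containing some x_k with k > n, so it is the (finite)
   sum of the monomials x_{j_1}...x_{j_d} over those j in J(N_0^d, chi)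
   all of whose entries are <= n. *)
Definition g_spec (W : {group 'S_d}) (chi : 'S_d -> K) (n : nat) : {mpoly K[n.+1]} :=
  \sum_(j : d.-tuple 'I_n.+1 | inJ W chi (map_tuple (@nat_of_ord n.+1) j))
     \prod_(i < d) 'X_(tnth j i).

(* ---- the semi-symmetric power [chi]^d(K^m), with row-vector conventions:
   vectors of K^m are row vectors, a linear map l : K^m -> K^m is x |-> x *m l. *)

(* dimension of (x)^d K^m; its standard basis e_{j_1} (x) ... (x) e_{j_d} is
   indexed by j : d.-tuple 'I_m through enum_rank / enum_val *)
Definition tdim (m : nat) := #|{: d.-tuple 'I_m}|.

Definition tensor_map (m : nat) (l : 'M[K]_m) : 'M[K]_(tdim m) :=
  \matrix_(a, b) \prod_(i < d) l (tnth (enum_val a) i) (tnth (enum_val b) i).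

Definition perm_tensor (m : nat) (s : 'S_d) : 'M[K]_(tdim m) :=
  \matrix_(a, b) ((act_idx s (enum_val a) == enum_val b)%:R : K).

Definition chi_sub (W : {group 'S_d}) (chi : 'S_d -> K) (m : nat) : 'M[K]_(tdim m) :=
  (\sum_(s in W) ((chi s)^-1 *: (1%:M : 'M[K]_(tdim m)) - perm_tensor m s))%MS.

(* q : (x)^d K^m -> K^r (z |-> z *m q) is a quotient map by _chi((x)^d K^m):
   surjective with kernel exactly _chi((x)^d K^m); thus K^r is a model of
   [chi]^d(K^m), with x_1 chi ... chi x_d = (x_1 (x) ... (x) x_d) *m q *)
Definition semisym_quotient (W : {group 'S_d}) (chi : 'S_d -> K) (m r : nat)
    (q : 'M[K]_(tdim m, r)) : Prop :=
  row_full q /\ (kermx q == chi_sub W chi m)%MS.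

(* L is [chi]^d(l) in the model q : it sends x_1 chi ... chi x_d to
   l(x_1) chi ... chi l(x_d) *)
Definition induced_map (m r : nat) (q : 'M[K]_(tdim m, r)) (l : 'M[K]_m)
    (L : 'M[K]_r) : Prop :=
  tensor_map l *m q = q *m L.

End SemiSym.

(* Main.v *)
Require Import Defs.
From HB Require Import structures.
From mathcomp Require Import all_boot all_order all_algebra all_fingroup.
From mathcomp Require Import mpoly.
Set Implicit Arguments. Unset Strict Implicit. Unset Printing Implicit Defensive.
Import Order.TTheory GRing.Theory.
Local Open Scope ring_scope.

Section Act.
Variable d : nat.

Lemma act_idxM (T : Type) (s t : 'S_d) (j : d.-tuple T) :
  act_idx (s * t)%g j = act_idx t (act_idx s j).
Proof.
by apply: eq_from_tnth => i; rewrite !tnth_map !tnth_ord_tuple invMg permM.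
Qed.

Lemma act_idx1 (T : Type) (j : d.-tuple T) : act_idx 1%g j = j.
Proof.
by apply: eq_from_tnth => i; rewrite !tnth_map !tnth_ord_tuple invg1 perm1.
Qed.

Lemma act_idx_map (T T' : Type) (f : T -> T') s (j : d.-tuple T) :
  act_idx s (map_tuple f j) = map_tuple f (act_idx s j).
Proof.
apply: eq_from_tnth => i; by rewrite !tnth_map !tnth_ord_tuple.
Qed.

Lemma prod_act (R : comSemiRingType) (T : Type) (F : T -> R) s (j : d.-tuple T) :
  \prod_(i < d) F (tnth (act_idx s j) i) = \prod_(i < d) F (tnth j i).
Proof.
rewrite (reindex_inj (@perm_inj _ s)) /=.
by apply: eq_bigr => i _; rewrite tnth_map tnth_ord_tuple permK.
Qed.

Section Ord.
Context (disp disp' : Order.disp_t) (T : orderType disp) (T' : orderType disp').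
Variable f : T -> T'.
Hypothesis fmono : {mono f : x y / (x <= y)%O}.

Lemma lexi_map (s1 s2 : seq T) :
  ((map f s1 : seqlexi T') <= (map f s2 : seqlexi T'))%O =
  ((s1 : seqlexi T) <= (s2 : seqlexi T))%O.
Proof.
elim: s1 s2 => [|x s1 ih] [|y s2] //=.
by rewrite !lexi_cons !fmono ih.
Qed.

Lemma f_inj : injective f.
Proof.
move=> x y fxy; apply/le_anti.
by rewrite -!fmono fxy lexx.
Qed.

Lemma inJ_map (K : fieldType) (W : {group 'S_d}) (chi : 'S_d -> K) (j : d.-tuple T) :
  inJ W chi (map_tuple f j) = inJ W chi j.
Proof.
rewrite /inJ; congr andb; apply: eq_forallb => s; rewrite act_idx_map.
  by rewrite /lexle /= lexi_map.
have inj_mt : injective (@map_tuple d _ _ f).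
  by move=> a b /(congr1 val) /= /(inj_map (f_inj)) /val_inj.
by rewrite (inj_eq inj_mt).
Qed.
End Ord.
End Act.
Lemma factor_through (F : fieldType) N r r0 (q : 'M[F]_(N, r)) (q0 : 'M[F]_(N, r0))
  (P0 : 'M[F]_(r0, N)) :
  P0 *m q0 = 1%:M -> (kermx q0 <= kermx q)%MS -> q0 *m (P0 *m q) = q.
Proof.
move=> hP hk.
have h1 : (1%:M - q0 *m P0) *m q0 = 0.
  by rewrite mulmxBl mul1mx -mulmxA hP mulmx1 subrr.
have : (1%:M - q0 *m P0 <= kermx q)%MS.
  apply: submx_trans hk; by rewrite sub_kermx h1.
rewrite sub_kermx => /eqP; rewrite mulmxBl mul1mx mulmxA => /eqP.
by rewrite subr_eq0 => /eqP <-.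
Qed.

Lemma trace_unique (F : fieldType) N r r0 (T : 'M[F]_N) (q : 'M[F]_(N, r))
  (q0 : 'M[F]_(N, r0)) (L : 'M[F]_r) (L0 : 'M[F]_r0) :
  row_full q -> row_full q0 -> (kermx q == kermx q0)%MS ->
  T *m q = q *m L -> T *m q0 = q0 *m L0 -> \tr L = \tr L0.
Proof.
move=> /row_fullP[P hP] /row_fullP[P0 hP0] /andP[k1 k2] hL hL0.
have e1 := factor_through hP0 k2.
have e2 := factor_through hP k1.
set M := P0 *m q; set M' := P *m q0.
have MM' : M *m M' = 1%:M by rewrite /M /M' -mulmxA e2 hP0.
have LE : L = M' *m L0 *m M.
  rewrite /M' -(mulmxA P) -hL0 mulmxA -(mulmxA _ q0) e1 -(mulmxA P) hL.
  by rewrite mulmxA hP mul1mx.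
by rewrite LE mxtrace_mulC mulmxA MM' mul1mx.
Qed.

Section Main.
Variables (K : fieldType) (d : nat) (W : {group 'S_d}) (chi : 'S_d -> K).
Hypothesis hchi : one_dim_char W chi.

Lemma chiM s t : s \in W -> t \in W -> chi (s * t)%g = chi s * chi t.
Proof. by case: hchi => h _; apply: h. Qed.

Lemma chi_neq0 s : s \in W -> chi s != 0.
Proof. by case: hchi => _ h; apply: h. Qed.

Lemma chi1 : chi 1%g = 1.
Proof.
have h := chiM (group1 W) (group1 W); rewrite mulg1 in h.
have nz := chi_neq0 (group1 W).
by apply: (mulfI nz); rewrite -h mulr1.
Qed.

Lemma chiV s : s \in W -> chi (s^-1)%g = (chi s)^-1.
Proof.
move=> sW; have := chiM sW (groupVr sW); rewrite mulgV chi1 => h.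
have nz := chi_neq0 sW.
by apply: (mulfI nz); rewrite -h divff.
Qed.

Section Orb.
Variable m : nat.
Local Notation tup := (d.-tuple 'I_m).

Definition orb (j : tup) : {set tup} := [set act_idx s j | s in W].
Definition good (j : tup) := [forall s in W, (act_idx s j == j) ==> (chi s == 1)].
Definition lexF (t : tup) : seqlexi 'I_m := val t.
Definition rep (j : tup) : tup := Order.arg_min j (fun t => t \in orb j) lexF.

Lemma orbP j t : reflect (exists2 s, s \in W & t = act_idx s j) (t \in orb j).
Proof. exact: imsetP. Qed.

Lemma orb_act j s : s \in W -> act_idx s j \in orb j.
Proof. by move=> sW; apply/orbP; exists s. Qed.

Lemma orb_refl j : j \in orb j.
Proof. by have := orb_act j (group1 W); rewrite act_idx1. Qed.

Lemma orb_sub j t : t \in orb j -> orb t \subset orb j.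
Proof.
case/orbP=> s sW ->; apply/subsetP => u /orbP[v vW ->].
by rewrite -act_idxM orb_act // groupM.
Qed.

Lemma orb_symm j t : t \in orb j -> j \in orb t.
Proof.
case/orbP=> s sW ->; apply/orbP; exists s^-1%g; first by rewrite groupV.
by rewrite -act_idxM mulgV act_idx1.
Qed.

Lemma orb_eq j t : t \in orb j -> orb t = orb j.
Proof.
move=> h; apply/eqP; rewrite eqEsubset orb_sub //.
exact/orb_sub/orb_symm.
Qed.

Lemma lexF_inj : injective lexF.
Proof. exact: val_inj. Qed.

Lemma rep_spec j : rep j \in orb j /\ forall t, t \in orb j -> (lexF (rep j) <= lexF t)%O.
Proof.
rewrite /rep; case: arg_minP; first exact: orb_refl.
by move=> i iin imin; split.
Qed.

Lemma rep_in j : rep j \in orb j.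
Proof. by case: (rep_spec j). Qed.

Lemma rep_min j t : t \in orb j -> (lexF (rep j) <= lexF t)%O.
Proof. by case: (rep_spec j) => _; apply. Qed.

Lemma rep_orb j t : t \in orb j -> rep t = rep j.
Proof.
move=> h; apply: lexF_inj; apply/le_anti.
rewrite rep_min ?rep_min //; last by rewrite (orb_eq h) rep_in.
by rewrite -(orb_eq h) rep_in.
Qed.

Lemma inJ_rep j : inJ W chi j -> rep j = j.
Proof.
case/andP=> /forallP h _; apply: lexF_inj; apply/le_anti.
rewrite rep_min ?orb_refl //=.
case/orbP: (rep_in j) => s sW ->.
by have := h s; rewrite sW.
Qed.

Lemma inJ_good j : inJ W chi j -> good j.
Proof. by case/andP. Qed.

Lemma rep_first j s : s \in W -> lexle (rep j) (act_idx s (rep j)).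
Proof.
move=> sW; apply: rep_min.
by rewrite -(orb_eq (rep_in j)) orb_act.
Qed.

Lemma inJ_repE j : inJ W chi (rep j) = good (rep j).
Proof.
rewrite /inJ /good.
have -> // : [forall s in W, lexle (rep j) (act_idx s (rep j))].
by apply/forallP => s; apply/implyP => sW; apply: rep_first.
Qed.

Lemma good_act j s : s \in W -> good (act_idx s j) = good j.
Proof.
suff H : forall j s, s \in W -> good j -> good (act_idx s j).
  move=> sW; apply/idP/idP; last exact: H.
  move=> g; have := H _ _ (groupVr sW) g.
  by rewrite -act_idxM mulgV act_idx1.
move=> {}j {}s sW /forallP g; apply/forallP => u; apply/implyP => uW.
apply/implyP => /eqP fix_u.
have : act_idx (s * u * s^-1)%g j == j.
  by rewrite !act_idxM fix_u -act_idxM mulgV act_idx1.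
move: (g (s * u * s^-1)%g); rewrite !groupM ?groupV //= => /implyP H1 /H1.
rewrite !chiM ?groupM ?groupV // chiV // mulrAC divff ?chi_neq0 // mul1r.
by [].
Qed.

Lemma inJ_orb j1 j2 : inJ W chi j1 -> inJ W chi j2 -> j1 \in orb j2 -> j1 = j2.
Proof.
move=> h1 h2 h; rewrite -(inJ_rep h1) -(inJ_rep h2).
exact: rep_orb.
Qed.


Definition coef (j a : tup) : K :=
  if [pick s in W | act_idx s j == a] is Some s then (chi s)^-1 else 0.

Lemma coefE j s : good j -> s \in W -> coef j (act_idx s j) = (chi s)^-1.
Proof.
move=> /forallP g sW; rewrite /coef; case: pickP => [s' /andP[s'W /eqP e]|].
  have : act_idx (s' * s^-1)%g j == j.
    by rewrite act_idxM e -act_idxM mulgV act_idx1.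
  move: (g (s' * s^-1)%g); rewrite groupM ?groupV //= => /implyP H /H /eqP.
  rewrite chiM ?groupV // chiV // => h1.
  have : chi s' = chi s.
    by apply: (mulIf (invr_neq0 (chi_neq0 sW))); rewrite h1 divff ?chi_neq0.
  by move=> ->.
by move=> /(_ s); rewrite sW eqxx.
Qed.

Lemma coef_out j a : a \notin orb j -> coef j a = 0.
Proof.
move=> h; rewrite /coef; case: pickP => [s' /andP[s'W /eqP e]|] //.
by move: h; rewrite -e orb_act.
Qed.

Local Notation N := (tdim d m).
Definition ev (a : 'I_N) : tup := enum_val a.
Definition e (t : tup) : 'rV[K]_N := delta_mx 0 (enum_rank t).
Definition mono (x : 'I_m -> K) (t : tup) := \prod_(i < d) x (tnth t i).

Lemma rank_eq (u : tup) (b : 'I_N) : (enum_rank u == b) = (u == ev b).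
Proof.
by rewrite -(inj_eq enum_val_inj) enum_rankK.
Qed.

Lemma sum_ev (G : tup -> K) : \sum_(a < N) G (ev a) = \sum_t G t.
Proof. by rewrite -(big_enum_val (A := {: tup})). Qed.

Lemma sum_pick (G : tup -> K) t : \sum_(a < N) ((ev a == t)%:R * G (ev a)) = G t.
Proof.
rewrite (sum_ev (fun u => (u == t)%:R * G u)) (bigD1 t) //= eqxx mul1r.
by rewrite big1 ?addr0 // => u /negbTE ->; rewrite mul0r.
Qed.

Definition Jset : {set tup} := [set j | inJ W chi j].
Definition jk (k : 'I_#|Jset|) : tup := enum_val k.
Lemma jk_inJ k : inJ W chi (jk k).
Proof. by have := enum_valP k; rewrite inE. Qed.

Definition q0 : 'M[K]_(N, #|Jset|) := \matrix_(a, k) coef (jk k) (ev a).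
Definition P0 : 'M[K]_(#|Jset|, N) := \matrix_(k, a) ((ev a == jk k)%:R).
Definition L0 (x : 'I_m -> K) : 'M[K]_#|Jset| := diag_mx (\row_k mono x (jk k)).

Lemma coef_jk k : coef (jk k) (jk k) = 1.
Proof.
by rewrite -{2}(act_idx1 (jk k)) coefE ?group1 ?inJ_good ?jk_inJ // chi1 invr1.
Qed.

Lemma P0q0 : P0 *m q0 = 1%:M.
Proof.
apply/matrixP => k k'; rewrite !mxE.
under eq_bigr do rewrite !mxE.
rewrite (sum_pick (fun t => coef (jk k') t)).
case: (eqVneq k k') => [<-|ne]; first by rewrite coef_jk.
rewrite coef_out //; apply/negP => h; move/negP: ne; apply.
by apply/eqP/enum_val_inj; apply: inJ_orb h; apply: jk_inJ.
Qed.

Lemma q0_full : row_full q0.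
Proof. by apply/row_fullP; exists P0; exact: P0q0. Qed.

Lemma tensor_diag (x : 'I_m -> K) :
  tensor_map d (diag_mx (\row_i x i)) = diag_mx (\row_a mono x (ev a)).
Proof.
apply/matrixP => a b; rewrite /tensor_map !mxE.
under eq_bigr do rewrite !mxE.
case: (eqVneq a b) => [<-|ne].
  by rewrite mulr1n; apply: eq_bigr => i _; rewrite eqxx mulr1n.
rewrite mulr0n.
case: (boolP [exists i, tnth (enum_val a) i != tnth (enum_val b) i]).
  by case/existsP => i hi; rewrite (bigD1 i) //= (negbTE hi) mulr0n mul0r.
move/existsPn => h; move/negP: ne; case; apply/eqP/enum_val_inj.
by apply: eq_from_tnth => i; apply/eqP; move: (h i); rewrite negbK.
Qed.

Lemma Tq0 (x : 'I_m -> K) :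
  tensor_map d (diag_mx (\row_i x i)) *m q0 = q0 *m L0 x.
Proof.
rewrite tensor_diag mul_diag_mx mul_mx_diag; apply/matrixP => a k; rewrite !mxE.
case: (boolP (ev a \in orb (jk k))) => [/orbP[s sW ->]|h].
  by rewrite /mono prod_act mulrC.
by rewrite coef_out // mul0r mulr0.
Qed.

Lemma trL0 (x : 'I_m -> K) : \tr (L0 x) = \sum_(j in Jset) mono x j.
Proof.
rewrite mxtrace_diag (big_enum_val (A := mem Jset)).
by apply: eq_bigr => k _; rewrite mxE.
Qed.

Lemma gen_q0 s : s \in W -> ((chi s)^-1 *: 1%:M - perm_tensor K m s) *m q0 = 0.
Proof.
move=> sW; apply/matrixP => a k; rewrite mulmxBl -scalemxAl mul1mx !mxE.
under eq_bigr do rewrite !mxE eq_sym.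
rewrite (sum_pick (fun t => coef (jk k) t)) -/(ev a).
case: (boolP (ev a \in orb (jk k))) => [/orbP[u uW ->]|h].
  rewrite -act_idxM !coefE ?inJ_good ?jk_inJ ?groupM // chiM //.
  by rewrite invfM mulrC subrr.
rewrite !coef_out ?mulr0 ?subr0 //.
apply/negP => h'; move/negP: h; apply.
apply: (subsetP (orb_sub h')); apply: orb_symm; exact: orb_act.
Qed.

Lemma sub_chi_ker : (chi_sub W chi m <= kermx q0)%MS.
Proof. by apply/sumsmx_subP => s sW; rewrite sub_kermx gen_q0. Qed.

Lemma gen_row s t : s \in W ->
  ((chi s)^-1 *: e t - e (act_idx s t) <= chi_sub W chi m)%MS.
Proof.
move=> sW.
suff <- : row (enum_rank t) ((chi s)^-1 *: 1%:M - perm_tensor K m s) =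
          (chi s)^-1 *: e t - e (act_idx s t).
  rewrite /chi_sub; apply: (sumsmx_sup s) => //; exact: row_sub.
apply/rowP => b; rewrite !mxE enum_rankK eqxx /= !(eq_sym b) !rank_eq.
by [].
Qed.


Lemma e_sub_bad j : ~~ good j -> (e j <= chi_sub W chi m)%MS.
Proof.
case/forallPn => t; rewrite negb_imply => /andP[tW]; rewrite negb_imply.
case/andP => /eqP fix_t ne1.
have H := gen_row j tW; rewrite fix_t in H.
have -> : e j = ((chi t)^-1 - 1)^-1 *: ((chi t)^-1 *: e j - e j).
  rewrite -{3}(scale1r (e j)) -scalerBl scalerA mulVf ?scale1r //.
  rewrite subr_eq0; apply/negP => /eqP h; move/negP: ne1; apply; apply/eqP.
  by rewrite -[chi t]invrK h invr1.
exact: scalemx_sub.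
Qed.

Lemma row_IqP a : (row a (1%:M - q0 *m P0) <= chi_sub W chi m)%MS.
Proof.
set j0 := rep (ev a).
have aj0 : ev a \in orb j0 by apply: orb_symm; apply: rep_in.
have [s sW ea] := orbP _ _ aj0.
have rowE : row a (1%:M - q0 *m P0) =
    e (ev a) - \sum_(k < #|Jset|) coef (jk k) (ev a) *: e (jk k).
  apply/rowP => b; rewrite !mxE summxE.
  rewrite /ev enum_valK eq_sym; congr (_ - _).
  apply: eq_bigr => k _; rewrite !mxE eqxx /= (eq_sym b) rank_eq.
  by rewrite eq_sym.
rewrite rowE.
case: (boolP (good j0)) => g.
  have j0J : j0 \in Jset by rewrite inE inJ_repE.
  set k0 := enum_rank_in j0J j0.
  have jk0 : jk k0 = j0 by rewrite /jk enum_rankK_in.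
  rewrite (bigD1 k0) //= big1 ?addr0; last first.
    move=> k nk; rewrite coef_out ?scale0r //.
    apply/negP => h; move/negP: nk; apply; apply/eqP/enum_val_inj.
    rewrite -/(jk k) -/(jk k0) jk0 /j0 (rep_orb h) inJ_rep //; exact: jk_inJ.
  rewrite jk0 ea coefE //.
  by rewrite -opprB -scaleN1r; apply: scalemx_sub; apply: gen_row.
rewrite big1 ?subr0; last first.
  move=> k _; rewrite coef_out ?scale0r //.
  apply/negP => h; move/negP: g; apply.
  rewrite /j0 (rep_orb h) inJ_rep ?jk_inJ //.
  exact: inJ_good (jk_inJ k).
rewrite ea.
have -> : e (act_idx s j0) =
   (chi s)^-1 *: e j0 - ((chi s)^-1 *: e j0 - e (act_idx s j0)).
  by rewrite opprB addrC subrK.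
by apply: addmx_sub; [apply: scalemx_sub; apply: e_sub_bad | rewrite -scaleN1r; apply: scalemx_sub; apply: gen_row].
Qed.

Lemma ker_sub_chi : (kermx q0 <= chi_sub W chi m)%MS.
Proof.
have -> : kermx q0 = kermx q0 *m (1%:M - q0 *m P0).
  by rewrite mulmxBr mulmx1 mulmxA mulmx_ker mul0mx subr0.
apply: submx_trans (submxMl _ _) _.
by apply/row_subP => a; apply: row_IqP.
Qed.

Lemma q0_quot : semisym_quotient W chi q0.
Proof. by split; [exact: q0_full | rewrite /eqmx ker_sub_chi sub_chi_ker]. Qed.


Lemma rep_act (t : tup) : exists2 s, s \in W & rep t = act_idx s t.
Proof. by have /orbP[s sW ->] := rep_in t; exists s. Qed.

Lemma good_rep (t : tup) : good (rep t) = good t.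
Proof. by have [s sW ->] := rep_act t; rewrite good_act. Qed.

Lemma good_map (τ : 'S_m) (j : tup) : good (map_tuple τ j) = good j.
Proof.
have inj_mt : injective (@map_tuple d _ _ τ).
  by move=> a b /(congr1 val) /= /(inj_map (@perm_inj _ τ)) /val_inj.
rewrite /good; apply: eq_forallb => s; rewrite act_idx_map.
by rewrite (inj_eq inj_mt).
Qed.

Lemma sum_sym (τ : 'S_m) :
  \sum_(j in Jset) \prod_(i < d) ('X_(τ (tnth j i)) : {mpoly K[m]}) =
  \sum_(j in Jset) \prod_(i < d) ('X_(tnth j i) : {mpoly K[m]}).
Proof.
have inj_mt : injective (@map_tuple d _ _ τ).
  by move=> a b /(congr1 val) /= /(inj_map (@perm_inj _ τ)) /val_inj.
pose F (t : tup) := \prod_(i < d) ('X_(tnth t i) : {mpoly K[m]}).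
pose h (j : tup) := rep (map_tuple τ j).
have Fh j : \prod_(i < d) ('X_(τ (tnth j i)) : {mpoly K[m]}) = F (h j).
  rewrite /h; have [s sW ->] := rep_act (map_tuple τ j).
  rewrite /F (prod_act (fun u => ('X_u : {mpoly K[m]}))); apply: eq_bigr => i _; by rewrite tnth_map.
under eq_bigr do rewrite Fh.
have hinj : {in Jset &, injective h}.
  move=> j1 j2; rewrite !inE => J1 J2 he.
  have : map_tuple τ j1 \in orb (map_tuple τ j2).
    rewrite -(orb_eq (rep_in (map_tuple τ j2))) -/(h j2) -he.
    by apply: orb_symm; apply: rep_in.
  case/orbP => s sW; rewrite act_idx_map => /inj_mt e1.
  by apply: inJ_orb => //; rewrite e1 orb_act.
have hJ : h @: Jset = Jset.
  apply/eqP; rewrite eqEcard card_in_imset // leqnn andbT.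
  apply/subsetP => t /imsetP[j]; rewrite !inE => jJ ->.
  by rewrite /h inJ_repE good_rep good_map inJ_good.
by rewrite -big_imset // hJ.
Qed.

End Orb.
End Main.

Lemma msymXU (R : ringType) m (s : 'S_m) (i : 'I_m) :
  msym s ('X_i : {mpoly R[m]}) = 'X_(s i).
Proof. by rewrite /msym mmapX mmap1U. Qed.

Unset Implicit Arguments.
Theorem lemma2p1p1 (K : fieldType) (d : nat) (W : {group 'S_d}) (chi : 'S_d -> K) :
  [pchar K] =i pred0 ->
  one_dim_char W chi ->
  (* each g_n is symmetric *)
  (forall n : nat, g_n W chi n \is symmetric) /\
  (* compatibility: g_{n+1}(x_0,...,x_n,0) = g_n(x_0,...,x_n) *)
  (forall n : nat,
     g_n W chi n.+1 \mPo [tuple (if (i < n.+1)%N then 'X_(inord i) else 0)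
                         : {mpoly K[n.+1]} | i < n.+2]
     = g_n W chi n) /\
  (* g(chi; x_0,...,x_n,0,0,...) = g_n(chi; x_0,...,x_n) *)
  (forall n : nat, g_spec W chi n = g_n W chi n) /\
  (* characteristic of [chi]^d(-): trace of [chi]^d(diag(x_0,...,x_n)) *)
  (forall (n : nat) (x : 'I_n.+1 -> K),
     (exists (r : nat) (q : 'M[K]_(tdim d n.+1, r)) (L : 'M[K]_r),
         semisym_quotient W chi q /\ induced_map q (diag_mx (\row_i x i)) L) /\
     (forall (r : nat) (q : 'M[K]_(tdim d n.+1, r)) (L : 'M[K]_r),
         semisym_quotient W chi q -> induced_map q (diag_mx (\row_i x i)) L ->
         \tr L = (g_n W chi n).@[x])).
Proof.
move=> _ hchi; split; [|split; [|split]].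
- move=> n; apply/issymP => τ.
  rewrite /g_n rmorph_sum /=.
  under eq_bigr do rewrite rmorph_prod /=.
  under eq_bigr do under eq_bigr do rewrite msymXU.
  have E (F : d.-tuple 'I_n.+1 -> {mpoly K[n.+1]}) :
    \sum_(j | inJ W chi j) F j = \sum_(j in Jset W chi n.+1) F j.
    by apply: eq_bigl => j; rewrite inE.
  rewrite !E; exact: sum_sym.
- move=> n; rewrite /g_n rmorph_sum /=.
  under eq_bigr do rewrite rmorph_prod /=.
  under eq_bigr do under eq_bigr do rewrite comp_mpolyXU -tnth_nth tnth_mktuple.
  rewrite (bigID (fun j : d.-tuple 'I_n.+2 => [forall i, tnth j i < n.+1]%N)) /=.
  rewrite [X in _ + X]big1 ?addr0; last first.
    move=> j /andP[_ /forallPn [i hi]].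
    by rewrite (bigD1 i) //= (negbTE hi) mul0r.
  rewrite (reindex_onto (map_tuple (widen_ord (leqnSn n.+1)))
            (map_tuple (fun i : 'I_n.+2 => inord i : 'I_n.+1))) /=; last first.
    move=> j /andP[_ /forallP h]; apply: eq_from_tnth => i.
    by rewrite !tnth_map; apply: val_inj => /=; rewrite inordK.
  apply: eq_big => [j|j _].
    rewrite inJ_map; last by move=> a b; rewrite !leEord.
    have -> : [forall i, tnth (map_tuple (widen_ord (leqnSn n.+1)) j) i < n.+1]%N.
      by apply/forallP => i; rewrite tnth_map /= ltn_ord.
    have -> : map_tuple (fun i : 'I_n.+2 => inord i : 'I_n.+1)
                (map_tuple (widen_ord (leqnSn n.+1)) j) == j.
      by apply/eqP/eq_from_tnth => i; rewrite !tnth_map /= inord_val.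
    by rewrite !andbT.
  by apply: eq_bigr => i _; rewrite tnth_map /= ltn_ord inord_val.
- move=> n; rewrite /g_spec /g_n; apply: eq_bigl => j.
  by rewrite (inJ_map (f := @nat_of_ord n.+1)) // => a b; rewrite leEord leEnat.
- move=> n x; split.
    exists #|Jset W chi n.+1|, (q0 W chi n.+1), (L0 W chi x); split.
      exact: q0_quot.
    exact: Tq0.
  move=> r q L [qf qk] hL.
  have [_ q0k] := q0_quot hchi n.+1.
  rewrite (trace_unique qf (q0_full hchi _) _ hL (Tq0 W chi x)); last first.
    move: qk q0k => /andP[a1 a2] /andP[b1 b2].
    by apply/andP; split; [apply: submx_trans b2 | apply: submx_trans a2].
  rewrite trL0 /g_n rmorph_sum; apply: esym; apply: eq_big => [j|j _].
    by rewrite inE.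
  rewrite rmorph_prod; apply: eq_bigr => i _. exact: mevalXU.
Qed.
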